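(* The affine algebraic set of primitive non-zero idempotents in $\mathfrak{J}(0)$ consists of two disjoint irreducible components of dimension one. Furthermore, the two generators $\mathfrak{a}$ and $\mathfrak{b}$ of $\mathfrak{J}(0)$ belong to different components.
   Context: $\mathbb{F}$ is a field of characteristic not $2$. $\mathfrak{J}(0)$ is the commutative algebra over $\mathbb{F}$ with basis $\mathfrak{a},\mathfrak{b},\sigma$ and product $\mathfrak{a}^2=\mathfrak{a}$, $\mathfrak{b}^2=\mathfrak{b}$, $\mathfrak{a}\mathfrak{b}=\frac12\mathfrak{a}+\frac12\mathfrak{b}+\sigma$, $\mathfrak{a}\sigma=-\frac12\mathfrak{a}$, $\mathfrak{b}\sigma=-\frac12\mathfrak{b}$, $\sigma^2=-\frac12\sigma$; its identity element is $-2\sigma$. Idempotents are viewed as points of $\mathbb{F}^3$ via coordinates with respect to the basis $\mathfrak{a},\mathfrak{b},\sigma$; an idempotent $e$ is primitive if $\{u:eu=u\}=\mathbb{F}e$. *)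

(* Defs.v *)
From HB Require Import structures.
From mathcomp Require Import all_boot all_order all_algebra.
Set Implicit Arguments. Unset Strict Implicit. Unset Printing Implicit Defensive.
Import GRing.Theory.
Local Open Scope ring_scope.

(* The algebra J(0) over a field F: elements are coordinate row vectors
   (x 0 0, x 0 1, x 0 2) w.r.t. the basis a, b, sigma. *)

Definition mkv (F : fieldType) (p q r : F) : 'rV[F]_3 :=
  \row_(i < 3) nth 0 [:: p; q; r] i.

Definition ja (F : fieldType) : 'rV[F]_3 := mkv 1 0 0.
Definition jb (F : fieldType) : 'rV[F]_3 := mkv 0 1 0.
Definition jsig (F : fieldType) : 'rV[F]_3 := mkv 0 0 1.

Definition jtab (F : fieldType) (i j : 'I_3) : 'rV[F]_3 :=
  match nat_of_ord i, nat_of_ord j with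
  | 0, 0 => ja F
  | 1, 1 => jb F
  | 0, 1 | 1, 0 => mkv (2^-1) (2^-1) 1
  | 0, 2 | 2, 0 => mkv (- 2^-1) 0 0
  | 1, 2 | 2, 1 => mkv 0 (- 2^-1) 0
  | _, _ => mkv 0 0 (- 2^-1)
  end.

Definition jmul (F : fieldType) (x y : 'rV[F]_3) : 'rV[F]_3 :=
  \sum_(i < 3) \sum_(j < 3) (x 0 i * y 0 j) *: jtab F i j.

Definition idempotent (F : fieldType) (e : 'rV[F]_3) : Prop := jmul e e = e.

Definition primitive (F : fieldType) (e : 'rV[F]_3) : Prop :=
  forall u : 'rV[F]_3, jmul e u = u <-> exists c : F, u = c *: e.

Definition prim_nz_idem (F : fieldType) (e : 'rV[F]_3) : Prop :=
  e <> 0 /\ idempotent e /\ primitive e.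

(* An affine line in F^3 (a 1-dimensional irreducible affine variety). *)
Definition affine_line (F : fieldType) (L : 'rV[F]_3 -> Prop) : Prop :=
  exists (p v : 'rV[F]_3), v <> 0 /\
    forall x, L x <-> exists t : F, x = p + t *: v.

(* Main.v *)
Require Import Defs.
From mathcomp Require Import all_boot all_order all_algebra.
From mathcomp Require Import ring.
Import GRing.Theory.
Local Open Scope ring_scope.

Section S.
Variable F : fieldType.

Lemma mkv_eta (x : 'rV[F]_3) : x = mkv (x 0 0) (x 0 1) (x 0 2).
Proof.
apply/rowP => i; rewrite /mkv mxE.
case: i => [[|[|[|i]]] Hi] //=; rewrite (_ : 0 = ord0) //; congr (x _ _); exact: val_inj.
Qed.

Lemma mkv_eq (a b c a' b' c' : F) :
  mkv a b c = mkv a' b' c' <-> [/\ a = a', b = b' & c = c'].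
Proof.
split.
  move=> E; split.
  - by have := congr1 (fun m : 'rV[F]_3 => m 0 (@Ordinal 3 0 isT)) E; rewrite !mxE.
  - by have := congr1 (fun m : 'rV[F]_3 => m 0 (@Ordinal 3 1 isT)) E; rewrite !mxE.
  - by have := congr1 (fun m : 'rV[F]_3 => m 0 (@Ordinal 3 2 isT)) E; rewrite !mxE.
by case=> -> -> ->.
Qed.

Lemma mkv_scale (c a b d : F) : c *: mkv a b d = mkv (c*a) (c*b) (c*d).
Proof. by apply/rowP => i; rewrite !mxE; case: i => [[|[|[|i]]] Hi] //=; rewrite mulr0. Qed.

Lemma mkv_add (a b d a' b' d' : F) : mkv a b d + mkv a' b' d' = mkv (a+a') (b+b') (d+d').
Proof. by apply/rowP => i; rewrite !mxE; case: i => [[|[|[|i]]] Hi] //=; rewrite addr0. Qed.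

Lemma mkv0 : mkv 0 0 0 = 0 :> 'rV[F]_3.
Proof. by apply/rowP => i; rewrite !mxE; case: i => [[|[|[|i]]] Hi]. Qed.

Lemma jmul_mkv (p q r x y z : F) :
  jmul (mkv p q r) (mkv x y z) =
  mkv (p*x + 2^-1*(p*y+q*x) - 2^-1*(p*z+r*x))
      (q*y + 2^-1*(p*y+q*x) - 2^-1*(q*z+r*y))
      (p*y+q*x - 2^-1*(r*z)).
Proof.
rewrite /jmul !big_ord_recl !big_ord0 !addr0.
apply/rowP => i; rewrite !mxE /= /jtab /= /ja /jb /mkv.
case: i => [[|[|[|i]]] Hi] //=; ring.
Qed.

Hypothesis hF : (2%:R : F) != 0.

Lemma eq_by (a b e : F) : e = 0 -> a - b = e -> a = b.
Proof. by move=> -> /eqP; rewrite subr_eq0 => /eqP. Qed.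

Lemma line1_prim t : prim_nz_idem (mkv (F:=F) (1+t) t (t*2)).
Proof.
split; [|split].
- rewrite -mkv0 => /mkv_eq [a b _].
  by move: a; rewrite b addr0 => /eqP; rewrite oner_eq0.
- rewrite /Defs.idempotent jmul_mkv; apply/mkv_eq; split; field; exact: hF.
move=> u; rewrite (mkv_eta u); move: (u 0 0) (u 0 1) (u 0 2) => x y z.
split.
- rewrite jmul_mkv => /mkv_eq [E1 E2 E3].
  have E1' : t*x + (1+t)*y - (1+t)*z = 0.
    rewrite -(mulr0 2) -(subrr x) -[X in _ = _ * (X - _)]E1.
    field; exact: hF.
  have E2' : (t-1)*y + t*x - t*z = 0.
    rewrite -(mulr0 2) -(subrr y) -[X in _ = _ * (X - _)]E2.
    field; exact: hF.
  have Hz : z = y * 2.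
    apply: (@eq_by _ _ ((t-1)*y+t*x-t*z - (t*x+(1+t)*y-(1+t)*z))).
      by rewrite E1' E2' subrr.
    ring.
  exists (x - y); rewrite mkv_scale; apply/mkv_eq; split.
  + apply: (@eq_by _ _ ((-1) * (t*x + (1+t)*y - (1+t)*z))); first by rewrite E1' mulr0.
    by rewrite Hz; ring.
  + apply: (@eq_by _ _ ((-1) * (t*x + (1+t)*y - (1+t)*z))); first by rewrite E1' mulr0.
    by rewrite Hz; ring.
  + apply: (@eq_by _ _ ((-2) * (t*x + (1+t)*y - (1+t)*z))); first by rewrite E1' mulr0.
    by rewrite Hz; ring.
- case=> c ->; rewrite mkv_scale jmul_mkv; apply/mkv_eq; split; field; exact: hF.
Qed.

Lemma line2_prim t : prim_nz_idem (mkv (F:=F) t (1+t) (t*2)).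
Proof.
split; [|split].
- rewrite -mkv0 => /mkv_eq [b a _].
  by move: a; rewrite b addr0 => /eqP; rewrite oner_eq0.
- rewrite /Defs.idempotent jmul_mkv; apply/mkv_eq; split; field; exact: hF.
move=> u; rewrite (mkv_eta u); move: (u 0 0) (u 0 1) (u 0 2) => x y z.
split.
- rewrite jmul_mkv => /mkv_eq [E1 E2 E3].
  have E1' : t*y + (1+t)*x - (1+t)*z = 0.
    rewrite -(mulr0 2) -(subrr y) -[X in _ = _ * (X - _)]E2.
    field; exact: hF.
  have E2' : (t-1)*x + t*y - t*z = 0.
    rewrite -(mulr0 2) -(subrr x) -[X in _ = _ * (X - _)]E1.
    field; exact: hF.
  have Hz : z = x * 2.
    apply: (@eq_by _ _ ((t-1)*x+t*y-t*z - (t*y+(1+t)*x-(1+t)*z))).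
      by rewrite E1' E2' subrr.
    ring.
  exists (y - x); rewrite mkv_scale; apply/mkv_eq; split.
  + apply: (@eq_by _ _ ((-1) * (t*y + (1+t)*x - (1+t)*z))); first by rewrite E1' mulr0.
    by rewrite Hz; ring.
  + apply: (@eq_by _ _ ((-1) * (t*y + (1+t)*x - (1+t)*z))); first by rewrite E1' mulr0.
    by rewrite Hz; ring.
  + apply: (@eq_by _ _ ((-2) * (t*y + (1+t)*x - (1+t)*z))); first by rewrite E1' mulr0.
    by rewrite Hz; ring.
- case=> c ->; rewrite mkv_scale jmul_mkv; apply/mkv_eq; split; field; exact: hF.
Qed.

Lemma prim_lines p q r : prim_nz_idem (mkv (F:=F) p q r) ->
  (p = 1 + q /\ r = q * 2) \/ (q = 1 + p /\ r = p * 2).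
Proof.
case=> nz [idem prim]; move: idem; rewrite /Defs.idempotent jmul_mkv => /mkv_eq [E1 E2 E3].
have E1' : p * (p + q - r - 1) = 0.
  rewrite -(subrr p) -[X in _ = X - _]E1.
  field; exact: hF.
have E2' : q * (p + q - r - 1) = 0.
  rewrite -(subrr q) -[X in _ = X - _]E2.
  field; exact: hF.
have [Hs|Hs] := eqVneq (p + q - r - 1) 0.
  have Hr : r = p + q - 1.
    by apply: (@eq_by _ _ (- (p + q - r - 1))); [by rewrite Hs oppr0 | ring].
  rewrite Hr in E3.
  have K : (p - q - 1) * (p - q + 1) = 0.
    rewrite -(mulr0 (-2)) -(subrr (p + q - 1)) -[X in _ = _ * (X - _)]E3.
    field; exact: hF.
  move/eqP: K; rewrite mulf_eq0 => /orP [/eqP K|/eqP K].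
    left; split.
      by apply: (@eq_by _ _ (p - q - 1)); [exact: K | ring].
    rewrite Hr; apply: (@eq_by _ _ (p - q - 1)); [exact: K | ring].
  right; split.
    by apply: (@eq_by _ _ (- (p - q + 1))); [by rewrite K oppr0 | ring].
  rewrite Hr; apply: (@eq_by _ _ (- (p - q + 1))); [by rewrite K oppr0 | ring].
have p0 : p = 0 by move/eqP: E1'; rewrite mulf_eq0 (negbTE Hs) orbF => /eqP.
have q0 : q = 0 by move/eqP: E2'; rewrite mulf_eq0 (negbTE Hs) orbF => /eqP.
rewrite p0 q0 in E3 nz prim.
have K : r * (r + 2) = 0.
  rewrite -(mulr0 (-2)) -(subrr r) -[X in _ = _ * (X - _)]E3.
  field; exact: hF.
move/eqP: K; rewrite mulf_eq0 => /orP [/eqP K|/eqP K].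
  by case: nz; rewrite K mkv0.
have r2 : r = -2 by apply: (@eq_by _ _ (r + 2)); [exact: K | ring].
have [H _] := prim (mkv 1 0 0).
have : jmul (mkv 0 0 r) (mkv 1 0 0) = mkv 1 0 0.
  by rewrite jmul_mkv r2; apply/mkv_eq; split; field; exact: hF.
move/H => [c]; rewrite mkv_scale => /mkv_eq [h _ _].
by move/eqP: h; rewrite mulr0 oner_eq0.
Qed.
End S.

Theorem proposition6p6 (F : fieldType) (hF : (2%:R : F) != 0) :
  exists L1 L2 : 'rV[F]_3 -> Prop,
    affine_line L1 /\ affine_line L2 /\
    (forall x, ~ (L1 x /\ L2 x)) /\
    (forall e, prim_nz_idem e <-> (L1 e \/ L2 e)) /\
    L1 (ja F) /\ L2 (jb F).
Proof.
pose v := mkv (F:=F) 1 1 2.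
have vnz : v <> 0.
  rewrite -mkv0 => /mkv_eq [h _ _]; by move/eqP: h; rewrite oner_eq0.
exists (fun x => exists t : F, x = ja F + t *: v).
exists (fun x => exists t : F, x = jb F + t *: v).
have E1 t : ja F + t *: v = mkv (1 + t) t (t * 2).
  rewrite /ja /v mkv_scale mkv_add; apply/mkv_eq; split; ring.
have E2 t : jb F + t *: v = mkv t (1 + t) (t * 2).
  rewrite /jb /v mkv_scale mkv_add; apply/mkv_eq; split; ring.
split; first by exists (ja F), v.
split; first by exists (jb F), v.
split.
  move=> x [[t ->] [s]]; rewrite E1 E2 => /mkv_eq [h1 h2 _].
  move/eqP: hF; apply; rewrite -h1 in h2.
  by apply: (@eq_by _ _ _ ((1 + (1 + t)) - t)); [rewrite -h2 subrr | ring].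
split; last by split; exists 0; rewrite scale0r addr0.
move=> e; split.
  rewrite (@mkv_eta _ e) => /(@prim_lines _ hF _ _ _) [[-> ->]|[-> ->]].
    by left; exists (e 0 1); rewrite E1.
  by right; exists (e 0 0); rewrite E2.
case=> -[t ->]; [rewrite E1; exact: line1_prim | rewrite E2; exact: line2_prim].
Qed.
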